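(* Let $N, N_{\tilde y}, M \in \mathbb{N}$, $X\in\mathbb{R}^{N\times M}$, $\tilde Y \in \mathbb{R}^{N_{\tilde y}\times M}$, $\lambda\ge0$, $\Omega=\{1,\dots,N\}$. Let $\tilde Y = U\Sigma V$ be a singular value decomposition with $U\in\mathbb{R}^{N_{\tilde y}\times N_{\tilde y}}$, $V\in\mathbb{R}^{M\times M}$ orthogonal and $\Sigma\in\mathbb{R}^{N_{\tilde y}\times M}$ having diagonal entries $\sigma_1(\tilde Y)\ge\sigma_2(\tilde Y)\ge\cdots$ and zeros elsewhere. For $r\le\operatorname{rank}\tilde Y$ let $Z = \Sigma_{1:r,1:r}V_{1:r}\in\mathbb{R}^{r\times M}$, where $V_{1:r}$ denotes the first $r$ rows of $V$. Then for any $S\subset\Omega$ with $X_SX_S^\top+\lambda I_{|S|}\succ0$ (or $S=\emptyset$), \[ 0 \le J_{\tilde Y}(S) - J_Z(S) \le \sum_{i=r+1}^{\operatorname{rank}\tilde Y}\sigma_i^2(\tilde Y). \]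
   Context: For a matrix $Y$ with $M$ columns and $S\subset\Omega$ with $X_SX_S^\top+\lambda I_{|S|}\succ0$, $J_Y(S) = \operatorname{tr}\{ Y X_S^\top (X_S X_S^\top + \lambda I_{|S|})^{-1} X_S Y^\top \}$, where $X_S$ is the submatrix of $X$ consisting of the rows indexed by $S$; $J_Y(\emptyset)=0$. *)

(* Defs.v *)
From mathcomp Require Import all_boot all_order all_algebra.
Set Implicit Arguments. Unset Strict Implicit. Unset Printing Implicit Defensive.
Import Order.TTheory GRing.Theory Num.Theory.
Local Open Scope ring_scope.

Definition orthogonal_mx (R : ringType) (n : nat) (Q : 'M[R]_n) : Prop :=
  Q^T *m Q = 1%:M /\ Q *m Q^T = 1%:M.

Definition posdef_mx (R : realFieldType) (n : nat) (A : 'M[R]_n) : Prop :=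
  A^T = A /\ forall v : 'rV[R]_n, v != 0 -> 0 < (v *m A *m v^T) 0 0.

(* X_S : the rows of X indexed by S (in increasing order). *)
Definition rows_of (R : Type) (N M : nat) (X : 'M[R]_(N, M)) (S : {set 'I_N})
  : 'M[R]_(#|S|, M) := rowsub (fun i : 'I_#|S| => enum_val i) X.

Definition J (R : realFieldType) (N M K : nat) (X : 'M[R]_(N, M)) (lambda : R)
  (Y : 'M[R]_(K, M)) (S : {set 'I_N}) : R :=
  let XS := rows_of X S in
  \tr (Y *m XS^T *m invmx (XS *m XS^T + lambda%:M) *m XS *m Y^T).

Definition Zmat (R : ringType) (Ny M r : nat) (hN : (r <= Ny)%N) (hM : (r <= M)%N)
  (Sigma : 'M[R]_(Ny, M)) (V : 'M[R]_M) : 'M[R]_(r, M) :=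
  mxsub (widen_ord hN) (widen_ord hM) Sigma *m rowsub (widen_ord hM) V.

(* Main.v *)
Require Import Defs.
From mathcomp Require Import all_boot all_order all_algebra.
From mathcomp Require Import lra.
From Stdlib Require Import Lia.
Import Order.TTheory GRing.Theory Num.Theory.
Local Open Scope ring_scope.
Lemma rank_sig (R : realFieldType) (Ny M : nat) (Sigma : 'M[R]_(Ny, M)) (sigma : nat -> R)
  (hSigma : forall (i : 'I_Ny) (j : 'I_M),
      Sigma i j = if (i : nat) == (j : nat) then sigma i else 0)
  (hsig_nonneg : forall i : nat, (i < minn Ny M)%N -> 0 <= sigma i)
  (hsig_decr : forall i j : nat, (i <= j)%N -> (j < minn Ny M)%N -> sigma j <= sigma i)
  (k : nat) (hk : (k < minn Ny M)%N) (hs : sigma k != 0) : (k < \rank Sigma)%N.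
Proof.
have hkN : (k.+1 <= Ny)%N by move: hk; rewrite leq_min => /andP[].
have hkM : (k.+1 <= M)%N by move: hk; rewrite leq_min => /andP[].
set S' := mxsub (widen_ord hkN) (widen_ord hkM) Sigma.
have hpos : forall i : 'I_k.+1, 0 < sigma i.
  move=> i; have hik : (i <= k)%N by rewrite -ltnS.
  have := hsig_decr _ _ hik hk; have := hsig_nonneg _ hk.
  by rewrite le_eqVlt eq_sym (negbTE hs) /= => h1 h2; apply: lt_le_trans h1 h2.
have hU : S' \in unitmx.
  have ht : is_trig_mx S'.
    apply/(@is_trig_mxP _ _ _ S') => i j hij; rewrite /S' mxE hSigma /=.
    by rewrite ltn_eqF.
  rewrite unitmxE (det_trig ht) unitfE; apply/prodf_neq0 => i _.
  by rewrite /S' mxE hSigma /= eqxx gt_eqF.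
have -> : k = (k.+1).-1 by [].
rewrite -(mxrank_unit hU).
apply: leq_trans (_ : \rank (colsub (widen_ord hkM) Sigma) <= _)%N.
  by rewrite /S' mxsubrc; apply: mxrankS; apply: rowsub_sub.
by rewrite -[Sigma in colsub _ Sigma]mulmx1 -mulmx_colsub mxrankM_maxl.
Qed.

Lemma sq_ge0 (R : realFieldType) n (x : 'rV[R]_n) : 0 <= (x *m x^T) 0 0.
Proof. rewrite mxE; apply: sumr_ge0 => j _; rewrite mxE -expr2; exact: sqr_ge0. Qed.

Lemma dot_sym (R : realFieldType) n (x z : 'rV[R]_n) : (x *m z^T) 0 0 = (z *m x^T) 0 0.
Proof. rewrite !mxE; apply: eq_bigr => j _; by rewrite !mxE mulrC. Qed.

Lemma mxEB (R : realFieldType) m n (A C : 'M[R]_(m, n)) i j : (A - C) i j = A i j - C i j.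
Proof. by rewrite !mxE. Qed.

Lemma qform (R : realFieldType) s M (B : 'M[R]_(s, M)) (lambda : R) (hlam : 0 <= lambda)
  (hA : posdef_mx (B *m B^T + lambda%:M)) (v : 'rV[R]_M) (hv : (v *m v^T) 0 0 = 1) :
  0 <= (v *m (B^T *m invmx (B *m B^T + lambda%:M) *m B) *m v^T) 0 0 /\
  (v *m (B^T *m invmx (B *m B^T + lambda%:M) *m B) *m v^T) 0 0 <= 1.
Proof.
rewrite !mulmxA.
set A := B *m B^T + lambda%:M.
case: hA => hsym hpd.
have hAu : A \in unitmx.
  rewrite unitmxE unitfE; apply/negP => /det0P [x hx0 hx].
  by have := hpd x hx0; rewrite hx mul0mx mxE ltxx.
set u := v *m B^T.
set y := u *m invmx A.
have hyA : y *m A = u by rewrite /y mulmxKV.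
clearbody y.
set a := y *m B.
have e2 : (a *m v^T) 0 0 = (y *m A *m y^T) 0 0.
  by rewrite hyA /u -mulmxA -trmx_mul; apply: dot_sym.
have e3 : (y *m A *m y^T) 0 0 = (a *m a^T) 0 0 + lambda * (y *m y^T) 0 0.
  rewrite /A mulmxDr mulmxDl mxE /a trmx_mul !mulmxA; congr (_ + _).
  by rewrite mul_mx_scalar -scalemxAl mxE.
have hq0 : 0 <= (a *m v^T) 0 0.
  rewrite e2; have [->|hy0] := eqVneq y 0; first by rewrite !mul0mx mxE.
  by apply/ltW/hpd.
split => //.
have hd := @sq_ge0 _ _ (a - v).
rewrite linearB /= mulmxBl !mulmxBr !mxEB in hd.
have hyy := @sq_ge0 _ _ y. have haa := @sq_ge0 _ _ a.
have hs := @dot_sym _ _ v a.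
have hl : 0 <= lambda * (y *m y^T) 0 0 by apply: mulr_ge0.
nra.
Qed.

Lemma tr_diag (R : realFieldType) K M (F : 'M[R]_(K, M)) (f : nat -> R)
  (hF : forall i j, F i j = if (i : nat) == (j : nat) then f i else 0) (W : 'M[R]_M) :
  \tr (F *m W *m F^T) = \sum_(i < K) \sum_(j < M | (j : nat) == i) f i ^+ 2 * W j j.
Proof.
rewrite /mxtrace; apply: eq_bigr => i _.
rewrite mxE [RHS]big_mkcond /=; apply: eq_bigr => j _.
rewrite !mxE hF eq_sym.
case: eqP => hij; last by rewrite mulr0.
rewrite (bigD1 j) //= big1 ?addr0.
  by rewrite hF hij eqxx expr2 mulrAC.
move=> k hk; rewrite hF; case: eqP => [hik|]; last by rewrite mul0r.
by exfalso; move/negP: hk; apply; apply/eqP/val_inj => /=; lia.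
Qed.

Lemma entry_rowT (R : realFieldType) M (x : 'rV[R]_M) (V : 'M[R]_M) j :
  (x *m V^T) 0 j = (x *m (row j V)^T) 0 0.
Proof. rewrite !mxE; apply: eq_bigr => k _; by rewrite !mxE. Qed.

Lemma posdef0 (R : realFieldType) s (A : 'M[R]_s) : s = 0%N -> posdef_mx A.
Proof.
move=> hs; subst s; split; first by apply/matrixP => i; case: i.
by move=> v; rewrite [v]thinmx0 eqxx.
Qed.

Lemma Zmat_eq (R : realFieldType) (Ny M r : nat) (hN : (r <= Ny)%N) (hM : (r <= M)%N)
  (Sigma : 'M[R]_(Ny, M)) (V : 'M[R]_M) (sigma : nat -> R)
  (hSigma : forall (i : 'I_Ny) (j : 'I_M),
      Sigma i j = if (i : nat) == (j : nat) then sigma i else 0) :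
  Zmat hN hM Sigma V = rowsub (widen_ord hN) Sigma *m V.
Proof.
apply/matrixP => i k; rewrite /Zmat !mxE.
rewrite (bigD1 i) //= (bigD1 (widen_ord hM i)) //= !mxE !hSigma /= eqxx.
rewrite !big1 ?addr0 // => j hj; rewrite !mxE hSigma /=.
  case: eqP => [hik|]; last by rewrite mul0r.
  by exfalso; move/negP: hj; apply; apply/eqP/val_inj => /=; lia.
case: eqP => [hik|]; last by rewrite mul0r.
by exfalso; move/negP: hj; apply; apply/eqP/val_inj => /=; lia.
Qed.

Theorem lemma4 (R : realFieldType) (N Ny M : nat)
  (X : 'M[R]_(N, M)) (Yt : 'M[R]_(Ny, M)) (lambda : R) (hlam : 0 <= lambda)
  (U : 'M[R]_Ny) (Sigma : 'M[R]_(Ny, M)) (V : 'M[R]_M) (sigma : nat -> R)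
  (hU : orthogonal_mx U) (hV : orthogonal_mx V)
  (hSigma : forall (i : 'I_Ny) (j : 'I_M),
      Sigma i j = if (i : nat) == (j : nat) then sigma i else 0)
  (hsig_nonneg : forall i : nat, (i < minn Ny M)%N -> 0 <= sigma i)
  (hsig_decr : forall i j : nat, (i <= j)%N -> (j < minn Ny M)%N -> sigma j <= sigma i)
  (hsvd : Yt = U *m Sigma *m V)
  (r : nat) (hr : (r <= \rank Yt)%N) (hrN : (r <= Ny)%N) (hrM : (r <= M)%N)
  (S : {set 'I_N})
  (hS : S = set0 \/ posdef_mx (rows_of X S *m (rows_of X S)^T + lambda%:M)) :
  0 <= J X lambda Yt S - J X lambda (Zmat hrN hrM Sigma V) S /\
  J X lambda Yt S - J X lambda (Zmat hrN hrM Sigma V) S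
    <= \sum_(r <= i < \rank Yt) sigma i ^+ 2.
Proof.
set XS := rows_of X S.
set A := XS *m XS^T + lambda%:M.
set P := XS^T *m invmx A *m XS.
have hpd : posdef_mx A.
  case: hS => [hS0|//]; apply: posdef0; by rewrite hS0 cards0.
have JE : forall K (Y : 'M[R]_(K, M)), J X lambda Y S = \tr (Y *m P *m Y^T).
  by move=> K Y; rewrite /J /P !mulmxA.
set W := V *m P *m V^T.
case: hU => hU1 hU2; case: hV => hV1 hV2.
have JY : J X lambda Yt S = \tr (Sigma *m W *m Sigma^T).
  rewrite JE hsvd !trmx_mul -!mulmxA mxtrace_mulC -!mulmxA hU1 mulmx1.
  by rewrite /W !mulmxA.
have JZ : J X lambda (Zmat hrN hrM Sigma V) S =
    \tr (rowsub (widen_ord hrN) Sigma *m W *m (rowsub (widen_ord hrN) Sigma)^T).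
  by rewrite JE (@Zmat_eq _ _ _ _ hrN hrM _ _ _ hSigma) trmx_mul /W !mulmxA.
rewrite JY JZ (@tr_diag _ _ _ _ sigma hSigma) (@tr_diag _ _ _ _ sigma); last first.
  by move=> i j; rewrite mxE hSigma.
set t := fun i : nat => \sum_(j < M | (j:nat) == i) sigma i ^+ 2 * W j j.
have -> : \sum_(i < Ny) \sum_(j < M | (j:nat) == i) sigma i ^+ 2 * W j j
    = \sum_(0 <= i < Ny) t i by rewrite big_mkord.
have -> : \sum_(i < r) \sum_(j < M | (j:nat) == i) sigma i ^+ 2 * W j j
    = \sum_(0 <= i < r) t i by rewrite big_mkord.
rewrite (@big_cat_nat _ _ _ r 0 Ny _ _ (leq0n r) hrN) /= addrAC subrr add0r.
have hW : forall j : 'I_M, 0 <= W j j /\ W j j <= 1.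
  move=> j.
  have hv : (row j V *m (row j V)^T) 0 0 = 1.
    by rewrite -entry_rowT -row_mul hV2 !mxE eqxx ?mulr1n.
  have -> : W j j = (row j V *m P *m (row j V)^T) 0 0.
    by rewrite -entry_rowT -!row_mul /W [RHS]mxE.
  exact: (@qform _ _ _ XS lambda hlam hpd _ hv).
have hrk : (\rank Sigma <= \rank Yt)%N.
  have -> : Sigma = U^T *m Yt *m V^T.
    by rewrite hsvd !mulmxA hU1 mul1mx -mulmxA hV2 mulmx1.
  apply: leq_trans (mxrankM_maxl _ _) _; exact: mxrankM_maxr.
have hsig0 : forall i, (\rank Yt <= i)%N -> (i < minn Ny M)%N -> sigma i = 0.
  move=> i h1 h2; apply/eqP; apply: contraTT h1 => hs; rewrite -ltnNge.
  exact: leq_trans (@rank_sig _ _ _ _ _ hSigma hsig_nonneg hsig_decr _ h2 hs) hrk.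
split.
  apply: sumr_ge0 => i _; apply: sumr_ge0 => j _; apply: mulr_ge0.
    exact: sqr_ge0.
  exact: (hW j).1.
apply: le_trans (@ler_sum_nat _ _ _ _
   (fun i => if (i < \rank Yt)%N then sigma i ^+ 2 else 0) _) _.
  move=> i /andP[_ hiN]; rewrite /t; case: (ltnP i M) => hiM.
    rewrite (big_pred1 (Ordinal hiM)); last by move=> j; rewrite /= -val_eqE.
    have [h0 h1] := hW (Ordinal hiM).
    have hmin : (i < minn Ny M)%N by rewrite leq_min hiN hiM.
    case: ifP => hir.
      have := sqr_ge0 (sigma i); nra.
    have -> : sigma i = 0 by apply: hsig0 => //; rewrite leqNgt hir.
    by rewrite expr2 !mul0r.
  rewrite big_pred0; last first.
    move=> j /=; apply/negbTE; rewrite neq_ltn.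
    by rewrite (leq_trans (ltn_ord j) hiM).
  by case: ifP => _ //; exact: sqr_ge0.
rewrite (@big_cat_nat _ _ _ (\rank Yt) r Ny _ _ hr (rank_leq_row Yt)) /=.
rewrite [X in X + _](@eq_big_nat _ _ _ _ _ _ (fun i => sigma i ^+ 2)); last first.
  by move=> i /andP[_ ->].
rewrite [X in _ + X](@eq_big_nat _ _ _ _ _ _ (fun => 0)); last first.
  by move=> i /andP[h _]; rewrite ltnNge h.
by rewrite big1_eq addr0.
Qed.
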